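(* Let $d\ge2$ be an integer and $N_1,\dots,N_d$ positive integers. Let $X\subseteq[N_1]\times\cdots\times[N_d]$, and let $\mathbf{b}=(b_1,\dots,b_d)\in\mathbb{Z}^d\setminus\{\mathbf{0}\}$ with $\lambda=\lambda(\mathbf{b}):=\max_{1\le i\le d}\frac{|b_i|}{\gcd(b_1,\dots,b_d)N_i}\le1$. Let $s^*\le s\le\min_iN_i$ be positive integers. Suppose $f_{\mathbf{b}}:\mathbb{Z}^d\to\mathbb{Z}^{d-1}$ is a map of the form $f_{\mathbf{b}}(\mathbf{x})=M\mathbf{x}+\mathbf{v}$ ($M\in\mathbb{Z}^{(d-1)\times d}$, $\mathbf{v}\in\mathbb{Z}^{d-1}$) such that for all $\mathbf{x}_1,\mathbf{x}_2\in\mathbb{Z}^d$, $f_{\mathbf{b}}(\mathbf{x}_1)=f_{\mathbf{b}}(\mathbf{x}_2)$ iff $\mathbf{x}_1-\mathbf{x}_2=k\mathbf{b}$ for some $k\in\mathbb{Q}$, and let $\mathbf{b}'\in\mathbb{Z}^d$ satisfy $f_{\mathbf{b}}(\mathbf{b}')\ne f_{\mathbf{b}}(\mathbf{0})$. Then \[ |U^d(X,\mathbf{b},s)\cap U^d(X,\mathbf{b}',s)|\le\frac{s^*-1}{s}|U^d(X,\mathbf{b}',s)|+\frac2\lambda\big|U^{d-1}\big(f_{\mathbf{b}}(U^d(X,\mathbf{b},s)),\,f_{\mathbf{b}}(\mathbf{b}')-f_{\mathbf{b}}(\mathbf{0}),\,s^*\big)\big|. \]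
   Context: $[N]=\{1,\dots,N\}$. For $n\ge1$, a finite set $Y\subseteq\mathbb{Z}^n$, $\mathbf{c}\in\mathbb{Z}^n\setminus\{\mathbf{0}\}$ and a positive integer $r$: points $\mathbf{y},\mathbf{y}'$ are congruent mod $\mathbf{c}$ if $\mathbf{y}-\mathbf{y}'\in\mathbb{Z}\mathbf{c}$, and $U^n(Y,\mathbf{c},r)$ is the set of $\mathbf{y}\in Y$ with $|\{\mathbf{y}'\in Y:\mathbf{y}'\equiv\mathbf{y}\pmod{\mathbf{c}}\}|\ge r$. (If $\mathbf{b}'=\mathbf{0}$ is allowed by the hypothesis it cannot occur, since then $f_{\mathbf{b}}(\mathbf{b}')=f_{\mathbf{b}}(\mathbf{0})$.) *)

(* Defs.v *)
From HB Require Import structures.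
From mathcomp Require Import all_boot all_order all_algebra.
From mathcomp Require Import boolp.
From mathcomp Require Import finmap.
Set Implicit Arguments. Unset Strict Implicit. Unset Printing Implicit Defensive.
Import Order.TTheory GRing.Theory Num.Theory.
Local Open Scope ring_scope.
Local Open Scope fset_scope.

Definition congr_mod (n : nat) (c y y' : 'rV[int]_n) : bool :=
  `[< exists k : int, y - y' = k *: c >].

Definition Uset (n : nat) (Y : {fset 'rV[int]_n}) (c : 'rV[int]_n) (r : nat)
  : {fset 'rV[int]_n} :=
  [fset y in Y | (r <= #|` [fset y' in Y | congr_mod c y y'] |)%N].

Definition gcd_vec (n : nat) (b : 'rV[int]_n) : nat :=
  \big[gcdn/0%N]_(i < n) `|b ord0 i|%N.

Definition lambda_b (n : nat) (N : 'I_n -> nat) (b : 'rV[int]_n) : rat :=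
  \big[Num.max/0]_(i < n) ((`|b ord0 i|%N)%:R / ((gcd_vec b * N i)%N)%:R).

(* Main.v *)
Require Import Defs.
From HB Require Import structures.
From mathcomp Require Import all_boot all_order all_algebra.
From mathcomp Require Import boolp finmap zify ring.
Import Order.TTheory GRing.Theory Num.Theory.
Local Open Scope ring_scope.
Local Open Scope fset_scope.
Set Implicit Arguments. Unset Strict Implicit. Unset Printing Implicit Defensive.

Lemma gcd_vec_dvd d (b : 'rV[int]_d) (i : 'I_d) : (gcd_vec b %| `|b ord0 i|)%N.
Proof. by rewrite /gcd_vec (bigD1 i) //= dvdn_gcdl. Qed.

Lemma dvd_gcd_vec d (b : 'rV[int]_d) (a c : nat) :
  (forall j, a %| c * `|b ord0 j|)%N -> (a %| c * gcd_vec b)%N.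
Proof.
move=> h; rewrite /gcd_vec.
apply: (big_ind (fun x => a %| c * x)%N) => //.
- by rewrite muln0 dvdn0.
- by move=> x y hx hy; rewrite muln_gcdr dvdn_gcd hx hy.
Qed.

Lemma fiber_bound d (N : 'I_d -> nat) (b : 'rV[int]_d) (F : {fset 'rV[int]_d}) (i : 'I_d) :
  (forall x, x \in F -> (1 <= x ord0 i)%R /\ (x ord0 i <= (N i)%:Z)%R) ->
  b ord0 i != 0 ->
  (forall x1 x2, x1 \in F -> x2 \in F -> exists k : rat,
      map_mx (intr : int -> rat) (x1 - x2) = k *: map_mx (intr : int -> rat) b) ->
  (#|` F| <= (N i).-1 %/ (`|b ord0 i| %/ gcd_vec b) + 1)%N.
Proof.
move=> hbox hbi hk.
set m := (`|b ord0 i| %/ gcd_vec b)%N.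
have [->|/fset0Pn [x0 x0F]] := eqVneq F fset0; first by rewrite cardfs0.
set n := fun x : 'rV[int]_d => `|x ord0 i - 1|%N.
have nE : forall x, x \in F -> (n x)%:Z = x ord0 i - 1.
  move=> x /hbox [h1 h2]; by rewrite /n /= gez0_abs // subr_ge0.
have gpos : (0 < gcd_vec b)%N.
  rewrite lt0n; apply/negP => /eqP g0; move: (gcd_vec_dvd b i).
  by rewrite g0 dvd0n absz_eq0 (negbTE hbi).
have mg : (m * gcd_vec b = `|b ord0 i|)%N by rewrite /m divnK // gcd_vec_dvd.
have entry : forall x1 x2, x1 \in F -> x2 \in F -> forall j,
    (x1 ord0 j - x2 ord0 j) * b ord0 i = (x1 ord0 i - x2 ord0 i) * b ord0 j.
  move=> x1 x2 h1 h2 j; have [k hk12] := hk x1 x2 h1 h2.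
  have ej := congr1 (fun A : 'M[rat]_(1,d) => A ord0 j) hk12.
  have ei := congr1 (fun A : 'M[rat]_(1,d) => A ord0 i) hk12.
  move: ej ei; rewrite !mxE /= => ej ei.
  apply: (@intr_inj rat); rewrite !intrM.
  by rewrite ej ei; ring.
have cong : forall x, x \in F -> (n x %% m = n x0 %% m)%N.
  move=> x xF.
  have dv : (m %| `|x ord0 i - x0 ord0 i|)%N.
    rewrite -(@dvdn_pmul2r (gcd_vec b)) // mg.
    apply: dvd_gcd_vec => j.
    have := congr1 absz (entry x x0 xF x0F j); rewrite !abszM => <-.
    by rewrite dvdn_mull.
  have : ((n x)%:Z == (n x0)%:Z %[mod m%:Z])%Z.
    rewrite eqz_mod_dvd nE // nE //.
    have -> : x ord0 i - 1 - (x0 ord0 i - 1) = x ord0 i - x0 ord0 i by ring.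
    by rewrite dvdzE.
  by rewrite !modz_nat => /eqP [].
have inj : {in F &, injective (fun x => n x %/ m)%N}.
  move=> x1 x2 h1 h2 /= eq.
  have nx : n x1 = n x2.
    by rewrite (divn_eq (n x1) m) (divn_eq (n x2) m) eq cong // cong.
  have xi : x1 ord0 i = x2 ord0 i.
    have := congr1 Posz nx; rewrite !nE // => h.
    by rewrite -(subrK 1 (x1 ord0 i)) h subrK.
  have [k hk12] := hk x1 x2 h1 h2.
  have ei := congr1 (fun A : 'M[rat]_(1,d) => A ord0 i) hk12.
  move: ei; rewrite !mxE xi subrr /= => /esym /eqP.
  rewrite (_ : (0:int)%:~R = 0 :> rat) // mulf_eq0 intr_eq0 (negbTE hbi) orbF => /eqP k0.
  move: hk12; rewrite k0 scale0r => h0.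
  apply/rowP => j.
  have := congr1 (fun A : 'M[rat]_(1,d) => A ord0 j) h0; rewrite !mxE => /eqP.
  by rewrite intr_eq0 subr_eq0 => /eqP.
have aux : forall (t : int) (N0 k : nat), k%:Z = t - 1 -> (t <= N0%:Z)%R -> (k <= N0.-1)%N.
  move=> t N0 k; lia.
have u : uniq [seq (n x %/ m)%N | x <- (F : seq _)] by rewrite map_inj_in_uniq // fset_uniq.
rewrite -(size_map (fun x => n x %/ m)%N) -(size_iota 0 ((N i).-1 %/ m + 1)).
apply: uniq_leq_size u _ => t /mapP [x xF ->].
rewrite mem_iota add0n addn1 ltnS leq_div2r //.
have [_ h2] := hbox x xF.
exact: aux (nE x xF) h2.
Qed.
Lemma card_sep (T : choiceType) (B : {fset T}) (P : pred T) :
  #|` [fset b in B | P b]| = count P B.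
Proof.
have -> : [fset b in B | P b] = [fset x in [seq b <- (B : seq T) | P b]].
  by apply/fsetP => x; rewrite !inE mem_filter andbC.
by rewrite card_fseq undup_id ?size_filter // filter_uniq // fset_uniq.
Qed.

Lemma dcount (T1 T2 : choiceType) (A : {fset T1}) (B : {fset T2})
  (R : T1 -> T2 -> bool) (K1 K2 : nat) :
  (forall a, a \in A -> K1 <= #|` [fset b in B | R a b]|)%N ->
  (forall b, b \in B -> #|` [fset a in A | R a b]| <= K2)%N ->
  (K1 * #|` A| <= K2 * #|` B|)%N.
Proof.
move=> h1 h2.
have cnt : forall (T : choiceType) (s : seq T) (P : pred T),
    (\sum_(x <- s) (P x : nat))%N = count P s.
  move=> T s P; elim: s => [|x s IH]; first by rewrite big_nil.
  by rewrite big_cons IH.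
rewrite !card_fset_sum1 !big_distrr /=.
apply: (@leq_trans (\sum_(a <- A) \sum_(b <- B) (R a b : nat))%N).
  rewrite big_seq [X in (_ <= X)%N]big_seq; apply: leq_sum => a aA; rewrite muln1.
  by rewrite (cnt _ _ (R a)) -card_sep; apply: h1.
rewrite exchange_big /= big_seq [X in (_ <= X)%N]big_seq; apply: leq_sum => b bB; rewrite muln1.
by rewrite (cnt _ _ (R^~ b)) -card_sep; apply: h2.
Qed.
Definition Fl d (N : 'I_d -> nat) (b : 'rV[int]_d) (i : 'I_d) : rat :=
  ((`|b ord0 i|%N)%:R / ((gcd_vec b * N i)%N)%:R).

Lemma lambda_ge d (N : 'I_d -> nat) b j : Fl N b j <= lambda_b N b.
Proof. by rewrite /lambda_b (bigD1 j) //= le_max lexx. Qed.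

Lemma lambda_att d (N : 'I_d -> nat) b :
  lambda_b N b = 0 \/ exists i, lambda_b N b = Fl N b i.
Proof.
rewrite /lambda_b.
apply: (big_ind (fun x => x = 0 \/ exists i, x = Fl N b i)); first by left.
  by move=> x y hx hy; case: (leP x y) => _.
by move=> i _; right; exists i.
Qed.

Lemma lamK2 (a g Ni m : nat) :
  a = (m * g)%N -> (0 < g)%N -> (0 < Ni)%N ->
  a%:R / ((g * Ni)%N)%:R <= 1 :> rat ->
  a%:R / ((g * Ni)%N)%:R * ((Ni.-1 %/ m + 1)%N)%:R <= 2 :> rat.
Proof.
move=> -> g0 N0; rewrite ler_pdivrMr ?ltr0n ?muln_gt0 ?g0 ?N0 // mul1r ler_nat => h.
have mN : (m <= Ni)%N by rewrite mulnC leq_pmul2l // in h.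
rewrite mulrAC ler_pdivrMr ?ltr0n ?muln_gt0 ?g0 ?N0 // -!natrM ler_nat.
have := leq_trunc_div Ni.-1 m.
set q := (Ni.-1 %/ m)%N => hq.
rewrite [(m * g)%N]mulnC -mulnA [(2 * _)%N]mulnCA leq_pmul2l //.
nia.
Qed.

Lemma cmP n (c y y' : 'rV[int]_n) :
  reflect (exists k : int, y - y' = k *: c) (congr_mod c y y').
Proof. exact: asboolP. Qed.

Lemma cm_sym n (c y y' : 'rV[int]_n) : congr_mod c y y' -> congr_mod c y' y.
Proof.
move=> /cmP [k hk]; apply/cmP; exists (- k).
by rewrite scaleNr -hk opprB.
Qed.

Lemma cm_trans n (c x y z : 'rV[int]_n) :
  congr_mod c x y -> congr_mod c y z -> congr_mod c x z.
Proof.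
move=> /cmP [k1 h1] /cmP [k2 h2]; apply/cmP; exists (k1 + k2)%R.
by rewrite scalerDl -h1 -h2 addrA subrK.
Qed.

Lemma memU n (Y : {fset 'rV[int]_n}) c r y :
  (y \in Uset Y c r) = (y \in Y) && (r <= #|` [fset y' in Y | congr_mod c y y']|)%N.
Proof. by rewrite inE. Qed.

Lemma memsep (T : choiceType) (A : {fset T}) (P : pred T) x :
  (x \in [fset y in A | P y]) = (x \in A) && P x.
Proof. by rewrite inE. Qed.

Lemma classE n (Y : {fset 'rV[int]_n}) c a z : congr_mod c a z ->
  [fset y' in Y | congr_mod c z y'] = [fset y' in Y | congr_mod c a y'].
Proof.
move=> az; apply/fsetP => w; rewrite !memsep.
case: (w \in Y) => //=; apply/idP/idP => h.
  exact: cm_trans az h.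
exact: cm_trans (cm_sym az) h.
Qed.

Lemma gcd_vec_gt0 d (b : 'rV[int]_d) i : b ord0 i != 0 -> (0 < gcd_vec b)%N.
Proof.
move=> hbi; rewrite lt0n; apply/negP => /eqP g0; move: (gcd_vec_dvd b i).
by rewrite g0 dvd0n absz_eq0 (negbTE hbi).
Qed.

Close Scope fset_scope.

Theorem lemma4p8 (d : nat) (N : 'I_d -> nat) (X : {fset 'rV[int]_d})
  (b : 'rV[int]_d) (s sstar : nat)
  (M : 'M[int]_(d.-1, d)) (v : 'rV[int]_(d.-1)) (b' : 'rV[int]_d) :
  (2 <= d)%N ->
  (forall i, 0 < N i)%N ->
  (forall x, x \in X -> forall i : 'I_d,
      (1 <= x ord0 i)%R /\ (x ord0 i <= (N i)%:Z)%R) ->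
  b != 0 ->
  lambda_b N b <= 1 ->
  (0 < sstar)%N -> (sstar <= s)%N -> (forall i, s <= N i)%N ->
  let fb := fun x : 'rV[int]_d => x *m M^T + v in
  (forall x1 x2 : 'rV[int]_d,
      fb x1 = fb x2 <->
      exists k : rat, map_mx (intr : int -> rat) (x1 - x2)
                      = k *: map_mx (intr : int -> rat) b) ->
  fb b' != fb 0 ->
  (#|` (Uset X b s `&` Uset X b' s)%fset |)%:R
    <= (sstar.-1)%:R / s%:R * (#|` Uset X b' s |)%:R
       + 2 / lambda_b N b
         * (#|` Uset [fset fb y | y in Uset X b s]%fset (fb b' - fb 0) sstar |)%:R
       :> rat.
Proof.
move=> d2 Npos hbox bnz lam1 s0 ss sN fb hfb hb'.
set U := Uset X b s. set U' := Uset X b' s.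
set FU := [fset fb y | y in U]%fset.
set c := fb b' - fb 0.
set V := Uset FU c sstar.
set W := (U `&` U')%fset.
set W1 := [fset y in W | fb y \notin V]%fset.
set W2 := [fset y in W | fb y \in V]%fset.
have fbB : forall x y, fb x - fb y = (x - y) *m M^T.
  by move=> x y; rewrite /fb mulmxBl opprD addrACA subrr addr0.
have cE : c = b' *m M^T by rewrite /c fbB subr0.
have cnz : c != 0 by rewrite /c subr_eq0.
have fb_cm : forall x y, congr_mod b' x y -> congr_mod c (fb x) (fb y).
  move=> x y /cmP [k hk]; apply/cmP; exists k.
  by rewrite fbB hk -scalemxAl cE.
have fb_inj : forall x y, congr_mod b' x y -> fb x = fb y -> x = y.
  move=> x y /cmP [k hk] e.
  have : k *: c = 0 by rewrite cE scalemxAl -hk -fbB e subrr.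
  move/eqP; rewrite scalemx_eq0 (negbTE cnz) orbF => /eqP k0.
  by apply/eqP; rewrite -subr_eq0 hk k0 scale0r.
have WU : forall y, y \in W -> (y \in U) && (y \in U').
  by move=> y; rewrite in_fsetI.
have hA : (#|` W| <= #|` W1| + #|` W2|)%N.
  apply: leq_trans (leq_card_fsetU W1 W2).1.
  apply: fsubset_leq_card; apply/fsubsetP => y yW.
  by rewrite in_fsetU !memsep yW /=; case: (_ && _).
have hB : (s * #|` W1| <= sstar.-1 * #|` U'|)%N.
  apply: (dcount (R := fun a z => congr_mod b' a z)).
    move=> a; rewrite memsep => /andP [/WU /andP [_ aU'] _].
    have := aU'; rewrite /U' memU => /andP [aX hs].
    apply: leq_trans hs _; apply: fsubset_leq_card; apply/fsubsetP => z.
    rewrite !memsep => /andP [zX az]; rewrite zX az andbT /=.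
    by rewrite (classE X az); move: aU'; rewrite /U' memU => /andP [].
  move=> z zU'.
  set S := [fset a in W1 | congr_mod b' a z]%fset.
  have [->|/fset0Pn [y yS]] := eqVneq S fset0; first by rewrite cardfs0.
  move: (yS); rewrite memsep => /andP [yW1 yz].
  move: yW1; rewrite memsep => /andP [/WU /andP [yU _] fyV].
  have fyFU : fb y \in FU by apply: in_imfset.
  move: fyV; rewrite /V memU fyFU /= -ltnNge => hlt.
  have e : #|` [fset fb a | a in S]%fset| = #|` S|.
    apply: card_in_imfset => a1 a2; rewrite !memsep => /andP [_ h1] /andP [_ h2].
    by apply: fb_inj; apply: cm_trans h1 (cm_sym h2).
  have hle : (#|` S| <= #|` [fset w in FU | congr_mod c (fb y) w]%fset|)%N.
    rewrite -e; apply: fsubset_leq_card; apply/fsubsetP => w /imfsetP [a aS ->].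
    move: aS; rewrite [_ \in S]memsep => /andP [aW1 az].
    move: aW1; rewrite [_ \in W1]memsep => /andP [/WU /andP [aU _] _].
    rewrite memsep in_imfset //=.
    by apply: fb_cm; apply: cm_trans yz (cm_sym az).
  by rewrite -ltnS prednK //; apply: leq_trans hlt.
have [j bj] : exists j, b ord0 j != 0.
  case: (boolP [exists j, b ord0 j != 0]) => [/existsP //|].
  rewrite negb_exists => /forallP h; move: bnz.
  rewrite (_ : b = 0) ?eqxx //; apply/rowP => k; rewrite mxE.
  by apply/eqP; have := h k; rewrite negbK.
have gpos := gcd_vec_gt0 bj.
have Fj : 0 < Fl N b j.
  by rewrite /Fl divr_gt0 // ltr0n ?absz_gt0 // muln_gt0 gpos Npos.
have lpos : 0 < lambda_b N b := lt_le_trans Fj (lambda_ge N b j).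
have [l0|[i li]] := lambda_att N b; first by move: lpos; rewrite l0 ltxx.
have bi : b ord0 i != 0.
  apply/negP => /eqP bi0; move: lpos; rewrite li /Fl bi0 /= mul0r ltxx.
  by [].
set K2 := ((N i).-1 %/ (`|b ord0 i| %/ gcd_vec b) + 1)%N.
have hC : (1 * #|` W2| <= K2 * #|` V|)%N.
  apply: (dcount (R := fun a w => fb a == w)).
    move=> a; rewrite [_ \in W2]memsep => /andP [_ faV].
    rewrite cardfs_gt0; apply/fset0Pn; exists (fb a).
    by rewrite memsep faV eqxx.
  move=> w wV; apply: fiber_bound => //.
    move=> x; rewrite memsep => /andP [xW2 _]; move: xW2.
    rewrite [_ \in W2]memsep => /andP [/WU /andP [xU _] _].
    by move: xU; rewrite /U memU => /andP [xX _]; apply: hbox.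
  move=> x1 x2; rewrite !memsep => /andP [_ /eqP e1] /andP [_ /eqP e2].
  by apply/hfb; rewrite e1 e2.
have hK : lambda_b N b * K2%:R <= 2.
  rewrite li /Fl; apply: (@lamK2 _ _ _ (`|b ord0 i| %/ gcd_vec b)) => //.
    by rewrite divnK // gcd_vec_dvd.
  by rewrite -/(Fl N b i) -li.
have K2le : K2%:R <= 2 / lambda_b N b.
  by rewrite ler_pdivlMr // mulrC.
have s0' : (0 < s)%N by apply: leq_trans ss.
apply: le_trans (_ : #|` W1|%:R + #|` W2|%:R <= _).
  by rewrite -natrD ler_nat.
apply: lerD.
  rewrite mulrAC ler_pdivlMr ?ltr0n // -!natrM ler_nat mulnC.
  by [].
rewrite mul1n in hC.
apply: le_trans (_ : (K2 * #|` V|)%:R <= _); first by rewrite ler_nat.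
by rewrite natrM ler_wpM2r.
Qed.
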